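(* Let $\mathcal{A}=\{1,\dots,n\}$ be a set of agents connected by a directed chain $1\to 2\to\cdots\to n$. Each agent $i$ has a finite local strategy set $\mathcal{P}_i$, the sets $\mathcal{P}_1,\dots,\mathcal{P}_n$ pairwise disjoint, and an integer budget $\kappa_i\ge 1$. Let $\mathcal{P}=\bigcup_{i\in\mathcal{A}}\mathcal{P}_i$. Let $f:2^{\mathcal{P}}\to\mathbb{R}_{\ge 0}$ be normal ($f(\emptyset)=0$), monotone nondecreasing and submodular. Let $\mathcal{S}^\star$ be a maximizer of $f(\mathcal{S})$ over $\mathcal{I}=\{\mathcal{S}\subset\mathcal{P} : |\mathcal{S}\cap\mathcal{P}_i|\le\kappa_i \ \forall i\in\mathcal{A}\}$. The agents run the decentralized sequential greedy algorithm, in which each message transmission may fail. Agent $1$ starts from $\bar{\mathcal{S}}_0=\emptyset$. For $i\ge 2$, agent $i$ starts from the set $\bar{\mathcal{S}}_{i-1}$ if the message from agent $i-1$ was delivered, and from $\emptyset$ otherwise. Starting from this set, agent $i$ performs $\kappa_i$ greedy steps; in each step it adds to its current set an element $s\in\mathcal{P}_i$ not yet selected that maximizes the marginal gain $f(\text{current}\cup\{s\})-f(\text{current})$. Call the result $\bar{\mathcal{S}}_i$; agent $i$ then sends $\bar{\mathcal{S}}_i$ to agent $i+1$. The message from agent $i$ to agent $i+1$ is successfully delivered with probability $p_i$, for $i=1,\dots,n-1$. The output of the algorithm is $\bar{\mathcal{S}}=\bigcup_{i\in\mathcal{A}}\bar{\mathcal{S}}_i$. Let $\mathcal{W}(\mathcal{G}_I)$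 denote the (random) clique number of the information graph $\mathcal{G}_I$ of the run. Then $$\mathbb{E}[f(\bar{\mathcal{S}})]\ \ge\ \alpha_p\, f(\mathcal{S}^\star),\qquad\text{where } \alpha_p=\sum_{l=1}^{n}\frac{1}{2+n-l}\,P\big(\mathcal{W}(\mathcal{G}_I)=l\big).$$
   Context: The information graph $\mathcal{G}_I$ of a run is the directed graph on $\mathcal{A}$ with an arc from agent $i$ to agent $j$ whenever agent $j$ has received agent $i$'s information, either directly or relayed through intermediate agents along the chain. Equivalently, there is an arc $i\to j$ for $i<j$ exactly when all messages $i\to i+1,\dots,j-1\to j$ were delivered. The clique number $\mathcal{W}(\mathcal{G}_I)$ is the size of the largest complete subgraph of the undirected version of $\mathcal{G}_I$. It equals one plus the length of the longest run of consecutive successfully delivered chain edges, and it equals $n$ when all messages are delivered. *)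

(* Defs.v *)
From mathcomp Require Import all_boot all_order all_algebra.
Set Implicit Arguments. Unset Strict Implicit. Unset Printing Implicit Defensive.
Import Order.TTheory GRing.Theory Num.Theory.
Local Open Scope ring_scope.

(* Agents are 0,...,n-1 (agent i of the paper is i-1 here).
   The ground set P is a finite type T; [owner x] is the agent whose local
   strategy set contains x, so P_i = [set x | owner x == i]; the P_i are
   pairwise disjoint and cover P. *)
Section Defs.
Variables (T : finType) (R : realFieldType).

Definition Pset (owner : T -> nat) (i : nat) : {set T} := [set x | owner x == i].

Definition normal_fun (f : {set T} -> R) := f set0 = 0.
Definition monotone_fun (f : {set T} -> R) :=
  forall A B : {set T}, A \subset B -> f A <= f B.
Definition submodular_fun (f : {set T} -> R) :=
  forall A B : {set T}, f (A :|: B) + f (A :&: B) <= f A + f B.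

Definition feasible (n : nat) (owner : T -> nat) (kappa : nat -> nat) (S : {set T}) :=
  forall i, (i < n)%N -> (#|S :&: Pset owner i| <= kappa i)%N.

Definition greedy_choice (f : {set T} -> R) (owner : T -> nat)
  (choose : nat -> {set T} -> option T) :=
  forall i (X : {set T}),
    (choose i X = None <-> (forall s, s \in Pset owner i -> s \in X)) /\
    (forall s, choose i X = Some s ->
       [/\ s \in Pset owner i, s \notin X &
         forall t, t \in Pset owner i -> t \notin X ->
           f (t |: X) - f X <= f (s |: X) - f X]).

Definition greedy_step (choose : nat -> {set T} -> option T) (i : nat) (X : {set T}) :=
  match choose i X with Some s => s |: X | None => X end.

Definition agent_run (choose : nat -> {set T} -> option T) (kappa : nat -> nat)
  (i : nat) (X : {set T}) : {set T} := iter (kappa i) (greedy_step choose i) X.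

(* delivery outcome: [tnth w k] = message from agent k to agent k+1 delivered *)
Definition delivered (n : nat) (w : n.-1.-tuple bool) (k : nat) : bool :=
  nth false w k.

Fixpoint Sbar (n : nat) (w : n.-1.-tuple bool) (choose : nat -> {set T} -> option T)
  (kappa : nat -> nat) (i : nat) : {set T} :=
  match i with
  | 0 => agent_run choose kappa 0 set0
  | m.+1 => agent_run choose kappa m.+1
              (if delivered w m then Sbar w choose kappa m else set0)
  end.

Definition output (n : nat) (w : n.-1.-tuple bool) choose kappa : {set T} :=
  \bigcup_(i < n) Sbar w choose kappa i.

End Defs.

Section Prob.
Variable (R : realFieldType).

Definition prob_outcome (n : nat) (p : nat -> R) (w : n.-1.-tuple bool) : R :=
  \prod_(k < n.-1) (if tnth w k then p k else 1 - p k).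

Definition info_arc (n : nat) (w : n.-1.-tuple bool) (i j : 'I_n) : bool :=
  (i < j)%N && [forall k : 'I_n.-1, ((i <= k) && (k < j))%N ==> tnth w k].

Definition info_adj (n : nat) (w : n.-1.-tuple bool) (i j : 'I_n) : bool :=
  (i != j) && (info_arc w i j || info_arc w j i).

Definition is_clique (n : nat) (w : n.-1.-tuple bool) (A : {set 'I_n}) : bool :=
  [forall i in A, forall j in A, (i != j) ==> info_adj w i j].

Definition clique_number (n : nat) (w : n.-1.-tuple bool) : nat :=
  \max_(A : {set 'I_n} | is_clique w A) #|A|.

Definition prob_clique (n : nat) (p : nat -> R) (l : nat) : R :=
  \sum_(w : n.-1.-tuple bool | clique_number w == l) prob_outcome p w.

Definition alpha_p (n : nat) (p : nat -> R) : R :=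
  \sum_(1 <= l < n.+1) ((2 + n - l)%N%:R)^-1 * prob_clique n p l.

End Prob.

(* Main.v *)
Require Import Defs.
From mathcomp Require Import all_boot all_order all_algebra.
From mathcomp Require Import lra zify.
Import Order.TTheory GRing.Theory Num.Theory.
Local Open Scope ring_scope.

Lemma dimret (R : realFieldType) (T : finType) (f : {set T} -> R) (Z U : {set T}) (o : T) :
  monotone_fun f -> submodular_fun f -> Z \subset U ->
  f (o |: U) - f U <= f (o |: Z) - f Z.
Proof.
move=> mono sub ZU.
case oU: (o \in U).
  have -> : o |: U = U by apply/setUidPr; rewrite sub1set.
  have := mono Z (o |: Z) (subsetUr _ _); lra.
have h := sub (o |: Z) U.
have e1 : (o |: Z) :|: U = o |: U.
  by rewrite -setUA (setUidPr ZU).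
have e2 : (o |: Z) :&: U = Z.
  apply/setP=> x; rewrite !inE; case: (eqVneq x o) => [->|_] /=.
    by rewrite oU; case oZ: (o \in Z) => //; rewrite (subsetP ZU) in oU.
  by case xZ: (x \in Z) => //=; rewrite (subsetP ZU).
rewrite e1 e2 in h; lra.
Qed.

Lemma step_sub (T : finType) (choose : nat -> {set T} -> option T) i (X : {set T}) :
  X \subset greedy_step choose i X.
Proof. by rewrite /greedy_step; case: (choose i X) => // s; apply: subsetUr. Qed.

Lemma iter_sub (T : finType) (choose : nat -> {set T} -> option T) i k (X : {set T}) :
  X \subset iter k (greedy_step choose i) X.
Proof.
elim: k => [|k IH]; first exact: subxx.
rewrite iterS; apply: (subset_trans IH); exact: step_sub.
Qed.

Lemma greedy_bound (R : realFieldType) (T : finType) (f : {set T} -> R) owner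
  (choose : nat -> {set T} -> option T) i k (X U O : {set T}) :
  monotone_fun f -> submodular_fun f -> greedy_choice f owner choose ->
  iter k (greedy_step choose i) X \subset U -> O \subset Pset owner i ->
  (#|O| <= k)%N ->
  \sum_(o in O) (f (o |: U) - f U) <= f (iter k (greedy_step choose i) X) - f X.
Proof.
move=> mono sub gr.
elim: k O => [|k IH] O /= HU HO Hk.
  move: Hk; rewrite leqn0 => /eqP/cards0_eq ->; rewrite big_set0; lra.
set Z := iter k (greedy_step choose i) X in IH HU *.
have ZU : Z \subset U := subset_trans (step_sub _ _ _ _) HU.
have XZ : X \subset Z := iter_sub _ _ _ _ _.
have [->|/set0Pn [o oO]] := eqVneq O set0.
  rewrite big_set0; have := mono _ _ (subset_trans XZ (step_sub _ choose i Z)); lra.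
rewrite (big_setD1 o oO) /=.
have IH' := IH (O :\ o) ZU (subset_trans (subsetDl _ _) HO).
have : (#|O :\ o| <= k)%N by move: Hk; rewrite (cardsD1 o O) oO add1n ltnS.
move/IH' => {}IH'.
suff : f (o |: U) - f U <= f (greedy_step choose i Z) - f Z by lra.
have oP : o \in Pset owner i := subsetP HO o oO.
have [h1 h2] := gr i Z.
rewrite /greedy_step; case E: (choose i Z) => [s|].
  have [sP snZ opt] := h2 s E.
  case oZ: (o \in Z).
    have -> : o |: U = U by apply/setUidPr; rewrite sub1set (subsetP ZU).
    have := mono Z (s |: Z) (subsetUr _ _); lra.
  have := dimret _ _ _ _ _ o mono sub ZU; have := opt o oP (negbT oZ); lra.
have oZ : o \in Z by apply: (proj1 h1 E).
have -> : o |: U = U by apply/setUidPr; rewrite sub1set (subsetP ZU).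
lra.
Qed.

Lemma union_bound (R : realFieldType) (T : finType) (f : {set T} -> R) (A U : {set T}) :
  monotone_fun f -> submodular_fun f ->
  f (A :|: U) - f U <= \sum_(o in A) (f (o |: U) - f U).
Proof.
move=> mono sub.
move Hk: #|A| => k; elim: k A Hk => [|k IH] A Hk.
  rewrite (cards0_eq Hk) set0U big_set0; lra.
have /set0Pn [o oA] : A != set0.
  by apply/negP => /eqP E; rewrite E cards0 in Hk.
rewrite (big_setD1 o oA) /=.
have := IH (A :\ o); rewrite (cardsD1 o A) oA add1n in Hk.
case: Hk => Hk; move/(_ Hk) => IH'.
have e : A :|: U = o |: ((A :\ o) :|: U) by rewrite setUA setD1K.
have := dimret _ _ _ _ _ o mono sub (subsetUr (A :\ o) U); rewrite -e; lra.
Qed.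

Definition XF (R : realFieldType) (F : nat -> R) (D : nat -> bool) (i : nat) : R :=
  match i with 0 => 0 | m.+1 => if D m then F m else 0 end.

Lemma telescope (R : realFieldType) (F : nat -> R) (D : nat -> bool) N :
  \sum_(i < N.+1) (F i - XF _ F D i) = F N + \sum_(m < N) (if D m then 0 else F m).
Proof.
elim: N => [|N IH].
  by rewrite big_ord1 big_ord0 /= subr0 addr0.
rewrite big_ord_recr /= IH big_ord_recr /=.
case: (D N); lra.
Qed.

Lemma tele_bound (R : realFieldType) n (F : nat -> R) (D : nat -> bool) (c : R) :
  0 <= c -> (forall i, (i < n)%N -> F i <= c) ->
  \sum_(i < n) (F i - XF _ F D i) <= (1 + \sum_(m < n.-1) (~~ D m : nat))%N%:R * c.
Proof.
move=> c0 Fc; case: n Fc => [|N] Fc.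
  by rewrite big_ord0 mulr_ge0.
rewrite telescope /= natrD mulrDl mul1r natr_sum mulr_suml.
apply: lerD; first exact: Fc.
apply: ler_sum => m _; case: (D m) => /=; first by rewrite mul0r.
by rewrite mul1r; apply: Fc; apply: leq_trans (ltn_ord m) _.
Qed.

Lemma sum_pick (R : realFieldType) (r : seq nat) (c : nat) (G : nat -> R) :
  uniq r -> \sum_(l <- r) (if c == l then G l else 0) = if c \in r then G c else 0.
Proof.
move=> ur; case: ifP => cr.
  rewrite (bigD1_seq c) //= eqxx big1 ?addr0 // => l.
  by rewrite eq_sym => /negbTE ->.
rewrite big1_seq // => l /andP[_ lr]; case: eqP => // E.
by rewrite E lr in cr.
Qed.

Lemma sum_le_card K (b : nat -> bool) : (\sum_(m < K) (b m : nat) <= K)%N.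
Proof.
rewrite -[X in (_ <= X)%N]card_ord -sum1_card; apply: leq_sum => i _; apply: leq_b1.
Qed.

Lemma sum_le_range a c (b : nat -> bool) : (\sum_(a <= m < c) (b m : nat) <= c - a)%N.
Proof.
apply: (@leq_trans (\sum_(a <= m < c) 1)%N); first by apply: leq_sum => i _; apply: leq_b1.
by rewrite sum_nat_const_nat muln1.
Qed.

Definition nfail n (w : n.-1.-tuple bool) : nat := \sum_(m < n.-1) (~~ delivered w m : nat).

Definition Xs (T : finType) n (w : n.-1.-tuple bool) choose kappa (i : nat) : {set T} :=
  match i with 0 => set0 | m.+1 => if delivered w m then Sbar w choose kappa m else set0 end.
Arguments Xs {T n}.
Arguments nfail {n}.

Lemma Sbar_eq (T : finType) n (w : n.-1.-tuple bool) (choose : nat -> {set T} -> option T) kappa i :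
  Sbar w choose kappa i = iter (kappa i) (greedy_step choose i) (Xs w choose kappa i).
Proof. by case: i. Qed.
Arguments Sbar_eq {T n}.

Lemma per_outcome (R : realFieldType) (T : finType) (n : nat)
  (owner : T -> nat) (kappa : nat -> nat)
  (f : {set T} -> R) (choose : nat -> {set T} -> option T) (Sstar : {set T})
  (w : n.-1.-tuple bool) :
  (forall x, (owner x < n)%N) ->
  normal_fun f -> monotone_fun f -> submodular_fun f ->
  feasible n owner kappa Sstar ->
  greedy_choice f owner choose ->
  f Sstar <= (2 + nfail w)%N%:R * f (output w choose kappa).
Proof.
move=> Hown Hnorm Hmono Hsub Hfeas Hgr.
set U := output w choose kappa.
have SU : forall i, (i < n)%N -> Sbar w choose kappa i \subset U.
  by move=> i hi; rewrite /U /output; apply: (bigcup_sup (Ordinal hi)).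
have U0 : 0 <= f U by rewrite -Hnorm; apply: Hmono; apply: sub0set.
have step1 : f Sstar <= f U + \sum_(o in Sstar) (f (o |: U) - f U).
  have := Hmono _ _ (subsetUl Sstar U); have := union_bound _ _ f Sstar U Hmono Hsub; lra.
have split : \sum_(o in Sstar) (f (o |: U) - f U) =
    \sum_(i < n) \sum_(o in Sstar :&: Pset owner i) (f (o |: U) - f U).
  rewrite (partition_big (fun o => Ordinal (Hown o)) xpredT) //=.
  apply: eq_bigr => i _; apply: eq_bigl => o; rewrite !inE.
  by congr (_ && _); rewrite -val_eqE.
have per : forall i : 'I_n, \sum_(o in Sstar :&: Pset owner i) (f (o |: U) - f U)
    <= f (Sbar w choose kappa i) - XF _ (fun j => f (Sbar w choose kappa j)) (delivered w) i.
  move=> i.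
  have -> : XF _ (fun j => f (Sbar w choose kappa j)) (delivered w) i = f (Xs w choose kappa i).
    case: (nat_of_ord i) => [|m] /=; first by rewrite Hnorm.
    by case: (delivered w m).
  have e := Sbar_eq w choose kappa i.
  rewrite e; apply: greedy_bound => //; first by rewrite -e; apply: SU.
    exact: subsetIr.
  exact: Hfeas.
have tb := tele_bound _ n (fun j => f (Sbar w choose kappa j)) (delivered w) (f U) U0
  (fun i hi => Hmono _ _ (SU i hi)).
have h : \sum_(o in Sstar) (f (o |: U) - f U) <= \sum_(i < n)
   (f (Sbar w choose kappa i) - XF _ (fun j => f (Sbar w choose kappa j)) (delivered w) i).
  by rewrite split; apply: ler_sum => i _; exact: per i.
rewrite /nfail natrD mulrDl -[2%N]/(1 + 1)%N natrD mulrDl mul1r.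
move: tb; rewrite natrD mulrDl mul1r.
lra.
Qed.

Lemma clique_card n (w : n.-1.-tuple bool) (A : {set 'I_n}) :
  is_clique w A -> (#|A| + nfail w <= n)%N.
Proof.
move=> clq.
have nf : (nfail w <= n.-1)%N by exact: (sum_le_card n.-1 (fun m => ~~ delivered w m)).
have [->|/set0Pn [a aA]] := eqVneq A set0.
  by rewrite cards0 add0n; apply: leq_trans nf _; apply: leq_pred.
case: (@arg_minnP _ a (fun i => i \in A) (fun i => val i) aA) => m mA mmin.
case: (@arg_maxnP _ a (fun i => i \in A) (fun i => val i) aA) => M MA Mmax.
have mM : (m <= M)%N by apply: mmin.
have Mn : (M < n)%N := ltn_ord M.
have cA : (#|A| <= (M - m).+1)%N.
  rewrite cardE -(size_map val) -(size_iota m (M - m).+1).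
  apply: uniq_leq_size; first by rewrite (map_inj_uniq val_inj) enum_uniq.
  move=> x /mapP [i]; rewrite mem_enum => iA ->; rewrite mem_iota.
  move: (mmin i iA) (Mmax i iA) => /= h1 h2; apply/andP; split; lia.
have mid : forall k, (m <= k < M)%N -> delivered w k.
  move=> k /andP[mk kM].
  have kn : (k < n.-1)%N by lia.
  have mneM : m != M by apply/eqP => E; rewrite E in mk; lia.
  move: clq => /forallP /(_ m); rewrite mA /= => /forallP /(_ M).
  rewrite MA mneM /= => /andP[_ /orP[|]] /andP[]; last by lia.
  move=> _ /forallP /(_ (Ordinal kn)); rewrite /= mk kM /= => t.
  by rewrite /delivered -(tnth_nth false w (Ordinal kn)).
have : (nfail w <= m + (n.-1 - M))%N.
  rewrite /nfail -(big_mkord xpredT (fun k => (~~ delivered w k : nat))).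
  rewrite (@big_cat_nat _ _ _ M) /=; [|lia|lia].
  rewrite (@big_cat_nat _ _ _ m 0 M) /=; [|lia|lia].
  rewrite (@big1_seq _ _ _ _ (index_iota m M)); last first.
    by move=> k /andP[_]; rewrite mem_iota => hk; rewrite mid //; lia.
  rewrite addn0; apply: leq_add.
    by have := sum_le_range 0 m (fun k => ~~ delivered w k); rewrite subn0.
  exact: sum_le_range.
lia.
Qed.

Lemma clique_bound n (w : n.-1.-tuple bool) : (clique_number w + nfail w <= n)%N.
Proof.
have h0 := @clique_card n w set0.
have : is_clique w set0 by apply/forallP => i; rewrite inE.
move/h0; rewrite cards0 add0n => nf.
suff : (clique_number w <= n - nfail w)%N by lia.
apply/bigmax_leqP => A /clique_card; lia.
Qed.

Theorem theorem1 (R : realFieldType) (T : finType) (n : nat)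
  (owner : T -> nat) (kappa : nat -> nat) (p : nat -> R)
  (f : {set T} -> R) (choose : nat -> {set T} -> option T) (Sstar : {set T}) :
  (forall x, (owner x < n)%N) ->
  (forall i, (i < n)%N -> (0 < kappa i)%N) ->
  (forall k, (k < n.-1)%N -> 0 <= p k <= 1) ->
  (forall A, 0 <= f A) ->
  normal_fun f -> monotone_fun f -> submodular_fun f ->
  feasible n owner kappa Sstar ->
  (forall S, feasible n owner kappa S -> f S <= f Sstar) ->
  greedy_choice f owner choose ->
  \sum_(w : n.-1.-tuple bool) prob_outcome p w * f (output w choose kappa)
    >= alpha_p n p * f Sstar.
Proof.
move=> Hown _ Hp Hf0 Hnorm Hmono Hsub Hfeas _ Hgr.
have probge0 : forall w : n.-1.-tuple bool, 0 <= prob_outcome p w.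
  move=> w; rewrite /prob_outcome; apply: prodr_ge0 => k _.
  have /andP[a b] := Hp k (ltn_ord k).
  by case: (tnth w k); lra.
rewrite /alpha_p /prob_clique big_distrl /=.
rewrite (eq_bigr (fun l => \sum_(w : n.-1.-tuple bool)
   (if clique_number w == l then ((2 + n - l)%N%:R)^-1 * prob_outcome p w * f Sstar else 0)));
  last first.
  move=> l _; rewrite big_mkcond mulr_sumr big_distrl /=; apply: eq_bigr => w _.
  by case: eqP => _; rewrite ?mulr0 ?mul0r ?mulrA.
rewrite exchange_big /=; apply: ler_sum => w _.
rewrite sum_pick; last by rewrite /index_iota iota_uniq.
case: ifP => hin; last by apply: mulr_ge0.
set c := clique_number w.
have cb := clique_bound _ w.
have po := per_outcome _ _ _ _ _ _ _ _ w Hown Hnorm Hmono Hsub Hfeas Hgr.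
set U := f (output w choose kappa) in po *.
have U0 : 0 <= U by apply: Hf0.
have h2 : f Sstar <= (2 + n - c)%N%:R * U.
  apply: (le_trans po); apply: ler_wpM2r => //; rewrite ler_nat; lia.
have pos : 0 < (2 + n - c)%N%:R :> R by rewrite ltr0n; lia.
have h3 : ((2 + n - c)%N%:R)^-1 * f Sstar <= U by rewrite ler_pdivrMl.
rewrite mulrAC [prob_outcome p w * U]mulrC.
by apply: ler_wpM2r => //.
Qed.
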